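(* If $V$ is a simple abelian intertwining algebra associated to an abelian group $A$ with normalized abelian $3$-cocycle $(F,\Omega)$, then the $V^0$-modules $V^\alpha$ are simple for all $\alpha\in A$. In particular, $V^0$ is a simple vertex operator algebra.
   Context: Normalized abelian $3$-cocycle: $F:A^3\to\mathbb C^\times$, $\Omega:A^2\to\mathbb C^\times$ with $F(\alpha_1,\alpha_2,\alpha_3)F(\alpha_1,\alpha_2+\alpha_3,\alpha_4)F(\alpha_2,\alpha_3,\alpha_4)=F(\alpha_1,\alpha_2,\alpha_3+\alpha_4)F(\alpha_1+\alpha_2,\alpha_3,\alpha_4)$, $F(\alpha_1,\alpha_2,\alpha_3)\Omega(\alpha_1+\alpha_2,\alpha_3)F(\alpha_3,\alpha_1,\alpha_2)=\Omega(\alpha_2,\alpha_3)F(\alpha_1,\alpha_3,\alpha_2)\Omega(\alpha_1,\alpha_3)$, $F(\alpha_1,\alpha_2,\alpha_3)^{-1}\Omega(\alpha_1,\alpha_2+\alpha_3)F(\alpha_2,\alpha_3,\alpha_1)^{-1}=\Omega(\alpha_1,\alpha_2)F(\alpha_2,\alpha_1,\alpha_3)^{-1}\Omega(\alpha_1,\alpha_3)$, and $F=1$ if an argument is $0$. Fix $\hat b$ with $e^{2\pi i\hat b(\alpha_1,\alpha_2)}=\Omega(\alpha_1,\alpha_2)\Omega(\alpha_2,\alpha_1)$, $B(\alpha_1,\alpha_2,\alpha_3)=F(\alpha_1,\alpha_2,\alpha_3)\Omega(\alpha_1,\alpha_2)F(\alpha_2,\alpha_1,\alpha_3)^{-1}$.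 An abelian intertwining algebra associated to $(A,F,\Omega)$: $A\times\mathbb C$-graded $V=\bigoplus V^\alpha_{(n)}$ (for each $\alpha$ and $R\in\mathbb R$, $V^\alpha_{(n)}=0$ for all but finitely many $n$ with $\mathrm{Re}\,n\le R$), $Y(v,x)=\sum_{n\in\mathbb C}v_nx^{-n-1}$, $\mathbf 1\in V^0_{(0)}$, $\omega\in V^0_{(2)}$, with $x^{\hat b(\alpha_1,\alpha_2)}Y(v_1,x)v_2\in V^{\alpha_1+\alpha_2}((x))$ for $v_i\in V^{\alpha_i}$; $Y(\mathbf 1,x)=\mathrm{id}$, $Y(v,x)\mathbf 1\in V[[x]]$ with constant term $v$; Jacobi identity $x_0^{-1}\big(\tfrac{x_1-x_2}{x_0}\big)^{\hat b(\alpha_1,\alpha_2)}\delta\big(\tfrac{x_1-x_2}{x_0}\big)Y(v_1,x_1)Y(v_2,x_2)v_3-B(\alpha_1,\alpha_2,\alpha_3)x_0^{-1}\big(\tfrac{x_2-x_1}{e^{\pi i}x_0}\big)^{\hat b(\alpha_1,\alpha_2)}\delta\big(\tfrac{x_2-x_1}{-x_0}\big)Y(v_2,x_2)Y(v_1,x_1)v_3=F(\alpha_1,\alpha_2,\alpha_3)x_1^{-1}\big(\tfrac{x_2+x_0}{x_1}\big)^{\hat b(\alpha_1,\alpha_3)}\delta\big(\tfrac{x_2+x_0}{x_1}\big)Y(Y(v_1,x_0)v_2,x_2)v_3$; $Y(\omega,x)=\sum L(n)x^{-n-2}$ satisfies the Virasoro relations and $V_{(n)}=\bigoplus_\alpha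 V^\alpha_{(n)}$ is the $L(0)$-eigenspace of eigenvalue $n$; $Y(L(-1)v,x)=\frac{d}{dx}Y(v,x)$. $V^\alpha=\bigoplus_nV^\alpha_{(n)}$; $V^0$ is a vertex operator algebra and each $V^\alpha$ a $V^0$-module. $V$ is simple if the only $A$-graded subspaces closed under all $v_n$, $v\in V$, $n\in\mathbb C$, are $0$ and $V$. *)

(* Defs.v *)
From HB Require Import structures.
From mathcomp Require Import all_boot all_order all_algebra.
From mathcomp Require Import complex.
From mathcomp Require Import boolp reals sequences exp trigo.

Set Implicit Arguments.
Unset Strict Implicit.
Unset Printing Implicit Defensive.

Import Order.TTheory GRing.Theory Num.Theory.
Local Open Scope ring_scope.

Section AIA.

(* The complex numbers are R[i] for a real type R (all realTypes are
   isomorphic to the reals, so quantifying over R is harmless). *)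
Variable R : realType.
Local Notation C := (R[i]).

Definition cexp (z : C) : C := Complex (expR (@complex.Re R z)) 0 * Complex (cos (@complex.Im R z)) (sin (@complex.Im R z)).

Definition ipi : C := Complex 0 pi.

Definition cbinom (c : C) (k : nat) : C :=
  (\prod_(j < k) (c - j%:R)) / (k`!)%:R.

Definition isint (z : C) : bool := `[< exists k : int, z = k%:~R >].

Variable A : zmodType.

Definition normalized_abelian_3cocycle
  (F : A -> A -> A -> C) (Om : A -> A -> C) : Prop :=
  [/\ (forall a1 a2 a3, F a1 a2 a3 != 0) /\ (forall a1 a2, Om a1 a2 != 0),
      (forall a1 a2 a3 a4,
         F a1 a2 a3 * F a1 (a2 + a3) a4 * F a2 a3 a4
         = F a1 a2 (a3 + a4) * F (a1 + a2) a3 a4),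
      (forall a1 a2 a3,
         F a1 a2 a3 * Om (a1 + a2) a3 * F a3 a1 a2
         = Om a2 a3 * F a1 a3 a2 * Om a1 a3),
      (forall a1 a2 a3,
         (F a1 a2 a3)^-1 * Om a1 (a2 + a3) * (F a2 a3 a1)^-1
         = Om a1 a2 * (F a2 a1 a3)^-1 * Om a1 a3) &
      (forall a1 a2 a3, [|| a1 == 0, a2 == 0 | a3 == 0] -> F a1 a2 a3 = 1)].

Definition Bfac (F : A -> A -> A -> C) (Om : A -> A -> C) (a1 a2 a3 : A) : C :=
  F a1 a2 a3 * Om a1 a2 / F a2 a1 a3.

Variable V : lmodType C.

(* The A x C grading of V is encoded by the family of projections
   pr a n : V -> V onto V^a_(n) (see [graded] below).
   v lies in V^a = (+)_n V^a_(n)  iff all its components of other A-degree vanish. *)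
Definition inVa (pr : A -> C -> V -> V) (a : A) (v : V) : Prop :=
  forall b n, b != a -> pr b n v = 0.

Definition fsum_is (f : nat -> V) (s : V) : Prop :=
  exists N, (forall k, (N <= k)%N -> f k = 0) /\ s = \sum_(k < N) f k.

(* L(m) = omega_{m+1}, since Y(omega, x) = sum_n L(n) x^{-n-2} *)
Definition Lop (mode : V -> C -> V -> V) (om : V) (m : int) : V -> V :=
  mode om (m%:~R + 1).

(* Coefficients of x0^r0 x1^r1 x2^r2 in the three terms of the Jacobi identity
   (the sums over k come from the binomial expansions of (x1-x2)^c in
   nonnegative powers of x2, (x2-x1)^c in nonnegative powers of x1, and
   (x2+x0)^c in nonnegative powers of x0; Y(v,x) = sum_n v_n x^{-n-1}). *)
Definition jac1 (mode : V -> C -> V -> V) (v1 v2 v3 : V) (r0 r1 r2 : C) (k : nat) : V :=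
  (cbinom (- r0 - 1) k * (-1) ^+ k) *:
    mode v1 (- r0 - r1 - k%:R - 2) (mode v2 (k%:R - 1 - r2) v3).

Definition jac2 (mode : V -> C -> V -> V) (v1 v2 v3 : V) (r0 r1 r2 : C) (k : nat) : V :=
  (cbinom (- r0 - 1) k * (-1) ^+ k) *:
    mode v2 (- r0 - r2 - k%:R - 2) (mode v1 (k%:R - 1 - r1) v3).

Definition jac3 (mode : V -> C -> V -> V) (v1 v2 v3 : V) (r0 r1 r2 : C) (k : nat) : V :=
  cbinom (- r1 - 1) k *: mode (mode v1 (k%:R - 1 - r0) v2) (- r1 - r2 - k%:R - 2) v3.

(* Abelian intertwining algebra associated to (A, F, Omega), with the fixed
   choice of bhat; data: grading projections pr, modes mode v n w = v_n w,
   vacuum one, conformal vector om. *)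
Record is_AIA (F : A -> A -> A -> C) (Om : A -> A -> C) (bh : A -> A -> C)
  (pr : A -> C -> V -> V) (mode : V -> C -> V -> V) (one om : V) : Prop := {
  (* V = (+)_{a,n} V^a_(n) *)
  pr_linear : forall a n c u v, pr a n (c *: u + v) = c *: pr a n u + pr a n v;
  pr_proj : forall a n b m v,
      pr a n (pr b m v) = if (a == b) && (n == m) then pr b m v else 0;
  pr_decomp : forall v, exists s : seq (A * C),
      uniq s /\ v = \sum_(p <- s) pr p.1 p.2 v;
  grading_truncation : forall (a : A) (r : R), exists s : seq C,
      forall n, @complex.Re R n <= r -> n \notin s -> forall v, pr a n v = 0;
  mode_linear_l : forall n w c u v,
      mode (c *: u + v) n w = c *: mode u n w + mode v n w;
  mode_linear_r : forall v n c u w,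
      mode v n (c *: u + w) = c *: mode v n u + mode v n w;
  (* x^{bhat(a1,a2)} Y(v1,x) v2 \in V^{a1+a2}((x)) *)
  mode_truncation : forall a1 a2 v1 v2, inVa pr a1 v1 -> inVa pr a2 v2 ->
      (forall n, inVa pr (a1 + a2) (mode v1 n v2)) /\
      exists N : int, forall n, mode v1 n v2 != 0 ->
        exists k : int, N <= k /\ bh a1 a2 - n - 1 = k%:~R;
  vacuum_deg : pr 0 0 one = one;
  vacuum_id : forall n w, mode one n w = if n == -1 then w else 0;
  creation_reg : forall v n, mode v n one != 0 ->
      exists k : nat, n = - k%:R - 1;
  creation_const : forall v, mode v (-1) one = v;
  (* Jacobi identity, coefficient of x0^r0 x1^r1 x2^r2 *)
  jacobi : forall a1 a2 a3 v1 v2 v3,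
      inVa pr a1 v1 -> inVa pr a2 v2 -> inVa pr a3 v3 ->
      forall r0 r1 r2 : C, exists s1 s2 s3 : V,
        [/\ fsum_is (jac1 mode v1 v2 v3 r0 r1 r2) s1,
            fsum_is (jac2 mode v1 v2 v3 r0 r1 r2) s2,
            fsum_is (jac3 mode v1 v2 v3 r0 r1 r2) s3 &
            (if isint (- r0 - bh a1 a2 - 1)
             then s1 - (Bfac F Om a1 a2 a3 * cexp (ipi * (r0 + 1))) *: s2
             else 0)
            = (if isint (- r1 - bh a1 a3 - 1) then F a1 a2 a3 *: s3 else 0)];
  omega_deg : pr 0 2 om = om;
  omega_int_modes : forall n w, mode om n w != 0 -> isint n;
  virasoro : exists c : C, forall (m n : int) w,
      Lop mode om m (Lop mode om n w) - Lop mode om n (Lop mode om m w)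
      = (m - n)%:~R *: Lop mode om (m + n) w
        + (if m + n == 0 then (m ^+ 3 - m)%:~R / 12%:R * c else 0) *: w;
  L0_eigen : forall (n : C) v,
      Lop mode om 0 v = n *: v <-> (forall a m, m != n -> pr a m v = 0);
  (* Y(L(-1)v, x) = d/dx Y(v, x) *)
  L_1_derivative : forall v m w,
      mode (Lop mode om (-1) v) m w = - m *: mode v (m - 1) w
}.

Definition subspace (W : V -> Prop) : Prop :=
  W 0 /\ forall c u v, W u -> W v -> W (c *: u + v).

Definition Agraded (pr : A -> C -> V -> V) (W : V -> Prop) : Prop :=
  forall w, W w -> exists s : seq (A * V),
    w = \sum_(p <- s) p.2 /\ (forall p, p \in s -> W p.2 /\ inVa pr p.1 p.2).

Definition simple_AIA (pr : A -> C -> V -> V) (mode : V -> C -> V -> V) : Prop :=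
  forall W, subspace W -> Agraded pr W ->
    (forall v n w, W w -> W (mode v n w)) ->
    (forall w, W w -> w = 0) \/ (forall w, W w).

Definition simple_Va_module (pr : A -> C -> V -> V) (mode : V -> C -> V -> V)
  (a : A) : Prop :=
  forall W, subspace W -> (forall w, W w -> inVa pr a w) ->
    (forall u n w, inVa pr 0 u -> W w -> W (mode u n w)) ->
    (forall w, W w -> w = 0) \/ (forall w, inVa pr a w -> W w).

End AIA.

(* Main.v *)
Require Import Defs.
From HB Require Import structures.
From mathcomp Require Import all_boot all_order all_algebra.
From mathcomp Require Import complex.
From mathcomp Require Import boolp reals sequences exp trigo.
From mathcomp Require Import ring zify.
Import GRing.Theory Num.Theory.
Local Open Scope ring_scope.

Inductive Tg {R : realType} {A : zmodType} {V : lmodType R[i]}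
  (pr : A -> R[i] -> V -> V) (mode : V -> R[i] -> V -> V) (W : V -> Prop) :
  V -> Prop :=
| Tg0 : Tg pr mode W 0
| TgS : forall (b : A) (v : V) (n : R[i]) (w x : V),
    inVa pr b v -> W w -> Tg pr mode W x -> Tg pr mode W (mode v n w + x).

Lemma simple_Va (R : realType) (A : zmodType)
  (F : A -> A -> A -> R[i]) (Om : A -> A -> R[i]) (bh : A -> A -> R[i])
  (V : lmodType R[i]) (pr : A -> R[i] -> V -> V) (mode : V -> R[i] -> V -> V)
  (one om : V) :
  is_AIA F Om bh pr mode one om -> simple_AIA pr mode ->
  forall a : A, simple_Va_module pr mode a.
Proof.
move=> hA hs a W [W0 Wlin] hWa hWcl.
have mode0l : forall n w, mode 0 n w = 0.
  move=> n w; move: (mode_linear_l hA n w 1 0 0); rewrite !scale1r addr0 => h.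
  by apply: (@addrI _ (mode 0 n w)); rewrite addr0 -h.
have mode0r : forall v n, mode v n 0 = 0.
  move=> v n; move: (mode_linear_r hA v n 1 0 0); rewrite !scale1r addr0 => h.
  by apply: (@addrI _ (mode v n 0)); rewrite addr0 -h.
have pr0 : forall b n, pr b n 0 = 0.
  move=> b n; move: (pr_linear hA b n 1 0 0); rewrite !scale1r addr0 => h.
  by apply: (@addrI _ (pr b n 0)); rewrite addr0 -h.
have modeZl : forall n w c u, mode (c *: u) n w = c *: mode u n w.
  by move=> n w c u; move: (mode_linear_l hA n w c u 0); rewrite !addr0 mode0l addr0.
have modeDl : forall n w u v, mode (u + v) n w = mode u n w + mode v n w.
  by move=> n w u v; move: (mode_linear_l hA n w 1 u v); rewrite !scale1r.
have modeDr : forall v n x y, mode v n (x + y) = mode v n x + mode v n y.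
  by move=> v n x y; move: (mode_linear_r hA v n 1 x y); rewrite !scale1r.
have prZ : forall b n c u, pr b n (c *: u) = c *: pr b n u.
  by move=> b n c u; move: (pr_linear hA b n c u 0); rewrite !addr0 pr0 addr0.
have prD : forall b n u v, pr b n (u + v) = pr b n u + pr b n v.
  by move=> b n u v; move: (pr_linear hA b n 1 u v); rewrite !scale1r.
have prN : forall b n u, pr b n (- u) = - pr b n u.
  by move=> b n u; rewrite -scaleN1r prZ scaleN1r.
have inVaZ : forall b c u, inVa pr b u -> inVa pr b (c *: u).
  by move=> b c u hu b' n hb; rewrite prZ hu // scaler0.
have pr_hom : forall b n v, inVa pr b (pr b n v).
  by move=> b n v b' n' hb; rewrite (pr_proj hA) (negbTE hb).
have hone : inVa pr 0 one.
  by move=> b n hb; rewrite -(vacuum_deg hA) (pr_proj hA) (negbTE hb).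
have TgD : forall x y, Tg pr mode W x -> Tg pr mode W y -> Tg pr mode W (x + y).
  move=> x y; elim=> [|b v n w x' hv hw _ IH] hy; first by rewrite add0r.
  by rewrite -addrA; apply: (TgS) hv hw (IH hy).
have TgZ : forall c x, Tg pr mode W x -> Tg pr mode W (c *: x).
  move=> c x; elim=> [|b v n w x' hv hw _ IH]; first by rewrite scaler0; exact: Tg0.
  by rewrite scalerDr -modeZl; apply: (TgS) (inVaZ _ _ _ hv) hw IH.
have Tg1 : forall b v n w, inVa pr b v -> W w -> Tg pr mode W (mode v n w).
  by move=> b v n w hv hw; rewrite -[mode v n w]addr0; apply: (TgS) hv hw (Tg0 _ _ _).
have Tgsum : forall K (f : nat -> V), (forall k, Tg pr mode W (f k)) ->
    Tg pr mode W (\sum_(k < K) f k).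
  move=> K f hf; apply: big_ind; [exact: Tg0 | exact: TgD | move=> i _; exact: hf].
have TgN : forall x, Tg pr mode W x -> Tg pr mode W (- x).
  by move=> x hx; rewrite -scaleN1r; apply: (TgZ).
have KEY : forall c b u v w, inVa pr c u -> inVa pr b v -> W w ->
    forall n m, Tg pr mode W (mode u m (mode v n w)).
  move=> c b u v w hu hv hw.
  have hwa := hWa w hw.
  have [_ [N1 hN1]] := mode_truncation hA hv hwa.
  have [_ [N2 hN2]] := mode_truncation hA hu hwa.
  have Q : forall d : nat, forall n, (forall j : int, bh b a - n - 1 = j%:~R -> j < N1 + d%:Z) ->
      forall m, Tg pr mode W (mode u m (mode v n w)).
    elim=> [|d IH] n hn m.
      have -> : mode v n w = 0.
        apply/eqP; apply: contraT => hne.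
        have [k [hk1 hk2]] := hN1 n hne.
        have := hn k hk2; lia.
      by rewrite mode0r; exact: Tg0.
    pose z := bh c a + bh c b - m - 1.
    have [p hp] : exists p : int, forall (k : nat) (j : int), N2 <= j ->
        z - p%:~R - k%:R != j%:~R.
      case: (pselect (exists q : int, z = q%:~R)) => [[q hq]|hnq].
        exists (q - N2 + 1) => k j hj; rewrite hq; apply/eqP => h.
        have : (q - (q - N2 + 1) - k%:Z) = j.
          by apply: (@intr_inj R[i]); rewrite -h; ring.
        lia.
      exists 0 => k j hj; apply/eqP => h; apply: hnq; exists (j + k%:Z).
      have -> : z = (z - (0:int)%:~R - k%:R) + k%:R by ring.
      by rewrite h; ring.
    pose r0 := - bh c b - 1 + p%:~R.
    pose r1 := bh c b - m - 1 - p%:~R.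
    pose r2 := -1 - n.
    have [s1 [s2 [s3 [H1 H2 H3 Heq]]]] := jacobi hA hu hv hwa r0 r1 r2.
    have hi : isint (- r0 - bh c b - 1).
      by apply: asboolT; exists (-p); rewrite /r0; ring.
    rewrite hi in Heq.
    have s2z : s2 = 0.
      case: H2 => K [_ ->]; apply: big1 => k _; rewrite /jac2.
      have -> : mode u (k%:R - 1 - r1) w = 0.
        apply/eqP; apply: contraT => hne.
        have [j [hj1 hj2]] := hN2 _ hne.
        have := hp k j hj1; rewrite -hj2 => /negbTE <-.
        by apply/eqP; rewrite /z /r1; ring.
      by rewrite mode0r scaler0.
    rewrite s2z scaler0 subr0 in Heq.
    have Ts1 : Tg pr mode W s1.
      rewrite Heq; case: ifP => _; last exact: Tg0.
      apply: (TgZ); case: H3 => K [_ ->]; apply: (Tgsum) => k; rewrite /jac3.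
      apply: (TgZ); apply: (Tg1) hw; exact: (mode_truncation hA hu hv).1.
    case: H1 => K [hK hs1]; rewrite hs1 in Ts1.
    have e1 : \sum_(k < K) jac1 mode u v w r0 r1 r2 k = \sum_(k < K.+1) jac1 mode u v w r0 r1 r2 k.
      by rewrite big_ord_recr /= hK // addr0.
    rewrite e1 big_ord_recl /= in Ts1.
    have e0 : jac1 mode u v w r0 r1 r2 0 = mode u m (mode v n w).
      rewrite /jac1 /cbinom big_ord0 expr0 mulr1 fact0 mul1r invr1 scale1r.
      have -> : - r0 - r1 - 0%:R - 2 = m by rewrite /r0 /r1; ring.
      have -> : 0%:R - 1 - r2 = n by rewrite /r2; ring.
      by [].
    rewrite -e0.
    set S := (X in jac1 _ _ _ _ _ _ _ 0 + X) in Ts1.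
    have -> : jac1 mode u v w r0 r1 r2 0 = (jac1 mode u v w r0 r1 r2 0 + S) - S by rewrite addrK.
    suff HS : Tg pr mode W S by exact: (TgD _ _ Ts1 (TgN _ HS)).
    rewrite /S; apply: (Tgsum K (fun k => jac1 mode u v w r0 r1 r2 (bump 0 k))) => i; rewrite /bump leq0n add1n /jac1.
    apply: (TgZ); apply: IH => j hj.
    have : bh b a - n - 1 = (j + (i.+1)%:Z)%:~R.
      by rewrite rmorphD /= -hj /r2; ring.
    move/hn; lia.
  move=> n m.
  case: (pselect (exists j0 : int, bh b a - n - 1 = j0%:~R)) => [[j0 hj0]|hn].
    apply: (Q `|j0 - N1|.+1) => j hj.
    have ej : j = j0 by apply: (@intr_inj R[i]); rewrite -hj hj0.
    rewrite ej; lia.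
  by apply: (Q 0) => j hj; exfalso; apply: hn; exists j.
have Tcl : forall u m x, Tg pr mode W x -> Tg pr mode W (mode u m x).
  move=> u m x; elim=> [|b v n w x' hv hw _ IH]; first by rewrite mode0r; exact: Tg0.
  rewrite modeDr; apply: (TgD _ _ _ IH).
  have [s [_ ->]] := pr_decomp hA u.
  elim: s => [|p s IHs]; first by rewrite big_nil mode0l; exact: Tg0.
  rewrite big_cons modeDl; apply: (TgD _ _ _ IHs).
  exact: (KEY p.1 b _ _ _ (pr_hom _ _ _) hv hw).
have TgA : Agraded pr (Tg pr mode W).
  move=> x; elim=> [|b v n w x' hv hw Tx [s [hs0 hsP]]].
    by exists [::]; rewrite big_nil.
  exists ((b + a, mode v n w) :: s); split; first by rewrite big_cons hs0.
  move=> p; rewrite inE => /orP [/eqP -> | hp]; last exact: hsP.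
  split; first exact: (Tg1 _ _ _ _ hv hw).
  exact: (mode_truncation hA hv (hWa w hw)).1 n.
have fin : forall x, Tg pr mode W x -> exists y z, x = y + z /\ W y /\
    (forall k, pr a k z = 0).
  move=> x; elim=> [|b v n w x' hv hw _ [y [z [-> [hy hz]]]]].
    by exists 0, 0; rewrite addr0; split => //; split => // k; rewrite pr0.
  case: (eqVneq b 0) => [eb|nb].
    exists (mode v n w + y), z; split; first by rewrite addrA.
    split => //.
    have := Wlin 1 _ _ (hWcl v n w _ hw) hy; rewrite scale1r; apply.
    by rewrite -eb.
  exists y, (mode v n w + z); split; first by rewrite addrCA.
  split => // k; rewrite prD hz addr0.
  apply: (mode_truncation hA hv (hWa w hw)).1.
  apply/eqP => h; move/eqP: nb; apply.
  by apply: (@addIr _ a); rewrite add0r -h.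
have zl : forall z, inVa pr a z -> (forall k, pr a k z = 0) -> z = 0.
  move=> z hz hk; have [s [_ ->]] := pr_decomp hA z.
  apply: big1 => p _; case: (eqVneq p.1 a) => [e|ne]; first by rewrite e hk.
  exact: hz.
case: (pselect (exists w0, W w0 /\ w0 <> 0)) => [[w0 [hw0 nz]]|hn].
  have hsub : subspace (Tg pr mode W).
    split; first exact: Tg0.
    by move=> c u v hu hv; apply: (TgD _ _ (TgZ c u hu) hv).
  case: (hs (Tg pr mode W) hsub TgA (fun v n w hw => Tcl v n w hw)) => [h0|hall].
    exfalso; apply: nz; apply: h0.
    have <- : mode one (-1) w0 = w0 by rewrite (vacuum_id hA) eqxx.
    exact: (Tg1 _ _ _ _ hone hw0).
  right => x hx.
  have [y [z [ex [hy hz]]]] := fin x (hall x).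
  have z0 : z = 0.
    apply: zl hz => b k hb.
    have -> : z = x - y by rewrite ex [y + z]addrC addrK.
    by rewrite prD prN hx // (hWa y hy) // subr0.
  by rewrite ex z0 addr0.
left => w hw; case: (eqVneq w 0) => // ne; exfalso; apply: hn; exists w; split => //.
exact/eqP.
Qed.

Theorem mainTheorem14 (R : realType) (A : zmodType)
  (F : A -> A -> A -> R[i]) (Om : A -> A -> R[i]) (bh : A -> A -> R[i])
  (V : lmodType R[i]) (pr : A -> R[i] -> V -> V) (mode : V -> R[i] -> V -> V)
  (one om : V) :
  normalized_abelian_3cocycle F Om ->
  (forall a1 a2, cexp ((2%:R * ipi R) * bh a1 a2) = Om a1 a2 * Om a2 a1) ->
  is_AIA F Om bh pr mode one om ->
  simple_AIA pr mode ->
  (forall a : A, simple_Va_module pr mode a) /\ simple_Va_module pr mode 0.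
Proof.
move=> _ _ hA hs; split; first exact: (@simple_Va _ _ _ _ _ _ _ _ _ _ hA hs).
exact: (@simple_Va _ _ _ _ _ _ _ _ _ _ hA hs).
Qed.
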